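(* Let $m=n=1$, $\boldsymbol s\in\{(1,-1),(-1,1)\}$, $\tilde{\boldsymbol s}=(s_2,s_1)$, $\boldsymbol z$ $h$-generic, let $y$ be a polynomial representing a solution of the BAE associated to $\boldsymbol s,\boldsymbol\lambda,\boldsymbol z,l$ and $\tilde y$ the polynomial with $y\,\tilde y[-s_1]=\varphi^{\boldsymbol s}-\psi^{\boldsymbol s}$. Define \[\mathcal R^{\boldsymbol s}(y)=\Big(1-\frac{T_1^{\boldsymbol s}y[s_1]}{T_1^{\boldsymbol s}[s_1]y}\tau\Big)^{s_1}\Big(1-\frac{T_2^{\boldsymbol s}y[-s_2]}{T_2^{\boldsymbol s}[s_2]y}\tau\Big)^{s_2},\] and $\mathcal R^{\tilde{\boldsymbol s}}(\tilde y)$ by the same formula with $\boldsymbol s,y,T^{\boldsymbol s}$ replaced by $\tilde{\boldsymbol s},\tilde y,T^{\tilde{\boldsymbol s}}$. If $\boldsymbol\lambda$ is typical, then $\mathcal R^{\boldsymbol s}(y)$ is a $(1|1)$-rational difference operator and $\mathcal R^{\boldsymbol s}(y)=\mathcal R^{\tilde{\boldsymbol s}}(\tilde y)$.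
   Context: Fix $h\in\mathbb{C}^\times$. $\mathbb{K}=\mathbb{C}(x)$, $f[i](x)=f(x-ih)$; $\mathbb{K}[\tau]$ difference operators with $\tau f=f[1]\tau$; $\mathbb{K}(\tau)$ its division ring of fractions. A fractional factorization $\mathcal R=\mathcal D_{\bar0}\mathcal D_{\bar1}^{-1}$ ($\mathcal D_{\bar0},\mathcal D_{\bar1}\in\mathbb{K}[\tau]$) is minimal if $\mathcal D_{\bar1}$ is monic of minimal order; $\mathcal R$ is a $(1|1)$-rational difference operator if in its minimal fractional factorization $\mathcal D_{\bar0},\mathcal D_{\bar1}$ are completely factorable over $\mathbb{K}$ (products of the leading coefficient and factors $\tau-g$, $g\in\mathbb{K}$), both have order $1$, and they have the same nonzero constant term. Polynomial $\mathfrak{gl}_{1|1}$ weights $\lambda^{(k)}$, $k=1,\dots,p$; their weights with respect to $\boldsymbol s$ (eigenvalues of $e_{\sigma(1)\sigma(1)},e_{\sigma(2)\sigma(2)}$ on the $\boldsymbol s$-highest weight vector, $\sigma$ the identity for $\boldsymbol s=(1,-1)$ and the transposition otherwise) are $(a_k,b_k)\in\mathbb{Z}^2_{\ge0}$ with $b_k=0$ if $a_k=0$; $\boldsymbol\lambda$ typical iff $a_k+b_k\ne0$ for some $k$. $\tilde a_k=b_k+1$, $\tilde b_k=a_k-1$ if $a_k+b_k\ne0$, else $\tilde a_k=\tilde b_k=0$. $\boldsymbol z$ $h$-generic. $T_1^{\boldsymbol s}=\prod_k\prod_{j=1}^{a_k}(x-z_k+s_1jh)$, $T_2^{\boldsymbol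 s}=\prod_k\prod_{j=1}^{b_k}(x-z_k+s_2jh)$, $T_1^{\tilde{\boldsymbol s}}=\prod_k\prod_{j=1}^{\tilde a_k}(x-z_k+\tilde s_1jh)$, $T_2^{\tilde{\boldsymbol s}}=\prod_k\prod_{j=1}^{\tilde b_k}(x-z_k+\tilde s_2jh)$. $\varphi^{\boldsymbol s}=\prod_{k:a_k+b_k\ne0}(x-z_k+s_1a_kh)$, $\psi^{\boldsymbol s}=\prod_{k:a_k+b_k\ne0}(x-z_k+s_2b_kh)$. BAE: $\prod_{k:a_k+b_k\ne0}\frac{t_j-z_k+s_1a_kh}{t_j-z_k+s_2b_kh}=1$, $j=1,\dots,l$, a root of multiplicity $r$ appearing at most $r$ times among the $t_j$; $y=\prod_j(x-t_j)$ represents the solution. *)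

(* Defs.v *)
From HB Require Import structures.
From mathcomp Require Import all_boot all_order all_algebra.
Set Implicit Arguments. Unset Strict Implicit. Unset Printing Implicit Defensive.
Import Order.TTheory GRing.Theory Num.Theory.
Local Open Scope ring_scope.

(* K = C(x) is {fraction {poly C}}; pfrac p is the image of a polynomial in K. *)
Definition pfrac (C : idomainType) (p : {poly C}) : {fraction {poly C}} :=
  @FracField.tofrac {poly C} p.

(* f[i](x) = f(x - i h), for polynomials *)
Definition shiftp (C : idomainType) (h : C) (i : int) (p : {poly C}) : {poly C} :=
  p \Po ('X - (i%:~R * h)%:P).

Definition h_generic (C : idomainType) (h : C) (p : nat) (z : 'I_p -> C) : Prop :=
  forall i j : 'I_p, i != j -> forall n : int, z i - z j != n%:~R * h.

Definition typical (p : nat) (a b : 'I_p -> nat) : Prop :=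
  exists k, (a k + b k != 0)%N.

Definition Tpoly (C : idomainType) (h : C) (p : nat) (z : 'I_p -> C)
  (c : int) (n : 'I_p -> nat) : {poly C} :=
  \prod_(k < p) \prod_(1 <= j < (n k).+1) ('X - (z k - c%:~R * j%:R * h)%:P).

Definition a_tilde (p : nat) (a b : 'I_p -> nat) (k : 'I_p) : nat :=
  if (a k + b k != 0)%N then (b k).+1 else 0%N.
Definition b_tilde (p : nat) (a b : 'I_p -> nat) (k : 'I_p) : nat :=
  if (a k + b k != 0)%N then (a k).-1 else 0%N.

(* phi^s (with c = s1, n = a) and psi^s (with c = s2, n = b) *)
Definition phipsi (C : idomainType) (h : C) (p : nat) (z : 'I_p -> C)
  (a b : 'I_p -> nat) (c : int) (n : 'I_p -> nat) : {poly C} :=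
  \prod_(k < p | (a k + b k != 0)%N) ('X - (z k - c%:~R * (n k)%:R * h)%:P).

Definition BAE_eq (C : fieldType) (h : C) (p : nat) (z : 'I_p -> C)
  (a b : 'I_p -> nat) (s1 s2 : int) (t0 : C) : Prop :=
  \prod_(k < p | (a k + b k != 0)%N)
     ((t0 - z k + s1%:~R * (a k)%:R * h) / (t0 - z k + s2%:~R * (b k)%:R * h)) = 1.

(* the tuple t = (t_1,...,t_l) is a solution of the BAE: each t_j solves the
   equation, and a root of multiplicity r (as a root of phi - psi, i.e. of the
   equation cleared of denominators) appears at most r times *)
Definition BAE_solution (C : fieldType) (h : C) (p : nat) (z : 'I_p -> C)
  (a b : 'I_p -> nat) (s1 s2 : int) (t : seq C) : Prop :=
  forall t0, t0 \in t ->
    BAE_eq h z a b s1 s2 t0 /\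
    (count_mem t0 t <= mup t0 (phipsi h z a b s1 a - phipsi h z a b s2 b))%N.

(* Evaluation of a difference operator sum_i P_i tau^i (coefficients on the
   left) inside a division ring D containing K[tau] *)
Definition opev (K D : nzRingType) (iota : K -> D) (tau : D) (P : {poly K}) : D :=
  \sum_(i < size P) iota P`_i * tau ^+ i.

Section Ops.
Variables (C : idomainType) (D : unitRingType).
Variables (iota : {fraction {poly C}} -> D) (tau : D).

Definition completely_factorable (P : {poly {fraction {poly C}}}) : Prop :=
  exists (c : {fraction {poly C}}) (gs : seq {fraction {poly C}}),
    opev iota tau P = iota c * \prod_(g <- gs) (tau - iota g).

Definition frac_fact (R : D) (D0 D1 : {poly {fraction {poly C}}}) : Prop :=
  D1 != 0 /\ R = opev iota tau D0 * (opev iota tau D1)^-1.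

Definition min_frac_fact (R : D) (D0 D1 : {poly {fraction {poly C}}}) : Prop :=
  [/\ frac_fact R D0 D1, D1 \is monic &
      forall E0 E1, frac_fact R E0 E1 -> E1 \is monic -> (size D1 <= size E1)%N].

Definition rational11 (R : D) : Prop :=
  exists D0 D1, min_frac_fact R D0 D1 /\
    completely_factorable D0 /\ completely_factorable D1 /\
    size D0 = 2%N /\ size D1 = 2%N /\ D0`_0 = D1`_0 /\ D1`_0 != 0.

Definition Rop (h : C) (s1 s2 : int) (T1 T2 Y : {poly C}) : D :=
  (1 - iota (pfrac (T1 * shiftp h s1 Y) / pfrac (shiftp h s1 T1 * Y)) * tau) ^ s1 *
  (1 - iota (pfrac (T2 * shiftp h (- s2) Y) / pfrac (shiftp h s2 T2 * Y)) * tau) ^ s2.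
End Ops.

(* Main.v *)
Require Import Defs.
From HB Require Import structures.
From mathcomp Require Import all_boot all_order all_algebra.
From mathcomp Require Import ring.
Import Order.TTheory GRing.Theory Num.Theory.
Local Open Scope ring_scope.

Section PolyShift.
Variables (C : idomainType) (h : C).

Lemma shiftpM i (p q : {poly C}) : shiftp h i (p * q) = shiftp h i p * shiftp h i q.
Proof. by rewrite /shiftp comp_polyM. Qed.

Lemma shiftp1 i : shiftp h i 1 = 1.
Proof. by rewrite /shiftp comp_polyC. Qed.

Lemma shiftpB i (p q : {poly C}) : shiftp h i (p - q) = shiftp h i p - shiftp h i q.
Proof. by rewrite /shiftp comp_polyB. Qed.

Lemma shiftp_prod i (I : Type) (r : seq I) (P : pred I) (F : I -> {poly C}) :
  shiftp h i (\prod_(k <- r | P k) F k) = \prod_(k <- r | P k) shiftp h i (F k).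
Proof. exact: (big_morph _ (shiftpM i) (shiftp1 i)). Qed.

Lemma shiftpXC i c : shiftp h i ('X - c%:P) = 'X - (i%:~R * h + c)%:P.
Proof. by rewrite /shiftp comp_polyB comp_polyX comp_polyC polyCD opprD addrA. Qed.

Lemma shiftpS i j (p : {poly C}) : shiftp h i (shiftp h j p) = shiftp h (i + j) p.
Proof.
rewrite /shiftp -comp_polyA; congr (p \Po _).
rewrite comp_polyB comp_polyX comp_polyC intrD mulrDl polyCD opprD addrA.
by [].
Qed.

Lemma shiftp0 (p : {poly C}) : shiftp h 0 p = p.
Proof. by rewrite /shiftp mul0r subr0 comp_polyXr. Qed.

Lemma shiftp_eq0 i (p : {poly C}) : (shiftp h i p == 0) = (p == 0).
Proof.
by rewrite -!size_poly_eq0 /shiftp size_comp_poly2 // size_XsubC.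
Qed.

Lemma shiftpK i (p : {poly C}) : shiftp h i (shiftp h (- i) p) = p.
Proof. by rewrite shiftpS subrr shiftp0. Qed.
Lemma shiftpKN i (p : {poly C}) : shiftp h (- i) (shiftp h i p) = p.
Proof. by rewrite shiftpS addNr shiftp0. Qed.

End PolyShift.

Section Tpoly.
Variables (C : idomainType) (h : C) (p : nat) (z : 'I_p -> C).

Lemma Tfactor (c : int) (z0 : C) (n : nat) :
  (\prod_(1 <= j < n.+1) ('X - (z0 - c%:~R * j%:R * h)%:P)) * ('X - z0%:P) =
  ('X - (z0 - c%:~R * n%:R * h)%:P) *
  shiftp h c (\prod_(1 <= j < n.+1) ('X - (z0 - c%:~R * j%:R * h)%:P)).
Proof.
elim: n => [|n IH].
  by rewrite big_geq // shiftp1 mul1r mulr1 mulr0 mul0r subr0.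
rewrite big_nat_recr //= shiftpM mulrAC IH.
have -> : shiftp h c ('X - (z0 - c%:~R * n.+1%:R * h)%:P) =
          'X - (z0 - c%:~R * n%:R * h)%:P.
  rewrite shiftpXC; congr ('X - _%:P); rewrite -natr1; ring.
by rewrite mulrC -!mulrA; congr (_ * _); rewrite mulrC.
Qed.

Lemma Tpoly_shift (c : int) (n : 'I_p -> nat) (S : pred 'I_p) :
  (forall k, ~~ S k -> n k = 0%N) ->
  Tpoly h z c n * \prod_(k | S k) ('X - (z k)%:P) =
  \prod_(k | S k) ('X - (z k - c%:~R * (n k)%:R * h)%:P) * shiftp h c (Tpoly h z c n).
Proof.
move=> Hn.
have ET : Tpoly h z c n = \prod_(k | S k) \prod_(1 <= j < (n k).+1) ('X - (z k - c%:~R * j%:R * h)%:P).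
  rewrite /Tpoly [RHS]big_mkcond /=; apply: eq_bigr => k _.
  by case: ifP => // /negbT /Hn ->; rewrite big_geq.
rewrite ET shiftp_prod -!big_split /=; apply: eq_bigr => k _.
exact: Tfactor.
Qed.
End Tpoly.

Lemma coefCXC0 (R : nzRingType) (c e : R) : (c%:P * 'X + e%:P)`_0 = e.
Proof. by rewrite coefD coefMX !coefC /= ?add0r ?addr0. Qed.
Lemma coefCXC1 (R : nzRingType) (c e : R) : (c%:P * 'X + e%:P)`_1 = c.
Proof. by rewrite coefD coefMX !coefC /= ?add0r ?addr0. Qed.
Lemma coefXC0 (R : nzRingType) (e : R) : ('X + e%:P)`_0 = e.
Proof. by rewrite coefD coefX !coefC /= ?add0r ?addr0. Qed.
Lemma coefXC1 (R : nzRingType) (e : R) : ('X + e%:P)`_1 = 1.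
Proof. by rewrite coefD coefX !coefC /= ?add0r ?addr0. Qed.

Lemma coefMX0 (R : nzRingType) (q : {poly R}) : (q * 'X)`_0 = 0.
Proof. by rewrite coefMX. Qed.
Lemma coefMXS (R : nzRingType) (q : {poly R}) i : (q * 'X)`_i.+1 = q`_i.
Proof. by rewrite coefMX. Qed.
Lemma coef1_0 (R : nzRingType) : (1 : {poly R})`_0 = 1.
Proof. by rewrite coef1. Qed.
Lemma coef1_1 (R : nzRingType) : (1 : {poly R})`_1 = 0.
Proof. by rewrite coef1. Qed.

Section Dlev.
Variables (C : idomainType) (h : C) (D : unitRingType).
Variables (iota : {rmorphism {fraction {poly C}} -> D}) (tau : D).
Hypothesis HU : forall d : D, d != 0 -> d \is a GRing.unit.
Hypothesis Htau : forall q : {poly C}, tau * iota (pfrac q) = iota (pfrac (shiftp h 1 q)) * tau.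
Hypothesis Hinj : forall P : {poly {fraction {poly C}}}, opev iota tau P = 0 -> P = 0.

Lemma opev_sum n (P : {poly {fraction {poly C}}}) : (size P <= n)%N -> opev iota tau P = \sum_(i < n) iota P`_i * tau ^+ i.
Proof.
move=> Hn; rewrite /opev (big_ord_widen n (fun i => iota P`_i * tau ^+ i) Hn) big_mkcond.
apply: eq_bigr => i _; case: ifP => // /negbT; rewrite -leqNgt => Hi.
by rewrite nth_default // rmorph0 mul0r.
Qed.

Lemma opev2 (P : {poly {fraction {poly C}}}) : (size P <= 2)%N -> opev iota tau P = iota P`_0 + iota P`_1 * tau.
Proof. by move=> H; rewrite (@opev_sum 2 P H) !big_ord_recl big_ord0 /= expr0 expr1 mulr1 addr0. Qed.

Lemma opevD (P Q : {poly {fraction {poly C}}}) : opev iota tau (P + Q) = opev iota tau P + opev iota tau Q.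
Proof.
pose n := maxn (size P) (size Q).
rewrite (@opev_sum n (P + Q)); last by rewrite (leq_trans (size_add _ _)).
rewrite (@opev_sum n P) ?leq_maxl // (@opev_sum n Q) ?leq_maxr // -big_split /=.
by apply: eq_bigr => i _; rewrite coefD rmorphD mulrDl.
Qed.

Lemma opevN (P : {poly {fraction {poly C}}}) : opev iota tau (- P) = - opev iota tau P.
Proof.
rewrite /opev size_polyN -sumrN; apply: eq_bigr => i _.
by rewrite coefN rmorphN mulNr.
Qed.

Lemma opev_inj (P Q : {poly {fraction {poly C}}}) : opev iota tau P = opev iota tau Q -> P = Q.
Proof.
move=> H; apply/eqP; rewrite -subr_eq0; apply/eqP/Hinj.
by rewrite opevD opevN H subrr.
Qed.

Lemma opevP2 (c0 c1 : {fraction {poly C}}) : opev iota tau (Poly [:: c0; c1]) = iota c0 + iota c1 * tau.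
Proof. by rewrite opev2 ?size_Poly // !coef_Poly. Qed.

Lemma one_sub_neq0 (x : {fraction {poly C}}) : 1 - iota x * tau != 0.
Proof.
apply/eqP => H.
have : opev iota tau (Poly [:: 1; - x]) = 0 by rewrite opevP2 rmorph1 rmorphN mulNr.
move=> /Hinj E; have := congr1 (fun q : {poly {fraction {poly C}}} => q`_0) E; rewrite coef_Poly coef0 /=; move=> /eqP.
by rewrite oner_eq0.
Qed.

Lemma tau_frac (N M : {poly C}) : tau * iota (pfrac N / pfrac M) =
   iota (pfrac (shiftp h 1 N) / pfrac (shiftp h 1 M)) * tau.
Proof.
have [->|M0] := eqVneq M 0.
  have -> : shiftp h 1 0 = 0 by apply/eqP; rewrite shiftp_eq0.
  by rewrite /pfrac tofrac0 invr0 !mulr0 rmorph0 mulr0 mul0r.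
have M10 : shiftp h 1 M != 0 by rewrite shiftp_eq0.
rewrite !rmorphM !fmorphV mulrA Htau -mulrA -[in RHS]mulrA; congr (_ * _).
have U0 : iota (pfrac M) \is a GRing.unit by apply: HU; rewrite fmorph_eq0 tofrac_eq0.
have U1 : iota (pfrac (shiftp h 1 M)) \is a GRing.unit.
  by apply: HU; rewrite fmorph_eq0 tofrac_eq0.
apply: (canLR (mulrK U0)); rewrite -mulrA Htau mulKr //.
Qed.

Lemma tau_fracn (i : nat) (N M : {poly C}) : tau ^+ i * iota (pfrac N / pfrac M) =
   iota (pfrac (shiftp h i N) / pfrac (shiftp h i M)) * tau ^+ i.
Proof.
elim: i => [|i IH]; first by rewrite !expr0 mul1r mulr1 !shiftp0.
rewrite exprS -mulrA IH mulrA tau_frac -mulrA -exprS !shiftpS.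
by rewrite -intS.
Qed.


Lemma shiftpN i (q : {poly C}) : shiftp h i (- q) = - shiftp h i q.
Proof.
have := @shiftpB C h i 0 q; rewrite !sub0r => ->.
have -> : shiftp h i 0 = 0 by apply/eqP; rewrite shiftp_eq0.
by rewrite sub0r.
Qed.

Lemma pfrac_eq0 (q : {poly C}) : (pfrac q == 0) = (q == 0).
Proof. exact: tofrac_eq0. Qed.

Lemma opevXC (e : {fraction {poly C}}) : opev iota tau ('X + e%:P) = tau + iota e.
Proof.
rewrite (opev2 _ (eq_leq (size_XaddC e))) coefXC0 coefXC1.
by rewrite rmorph1 mul1r addrC.
Qed.

Lemma opevCXC (c e : {fraction {poly C}}) : opev iota tau (c%:P * 'X + e%:P) = iota e + iota c * tau.
Proof.
have Hs : (size (c%:P * 'X + e%:P)%R <= 2)%N.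
  by rewrite size_MXaddC; case: ifP => _; [exact: leq0n | rewrite ltnS; exact: size_polyC_leq1].
rewrite (opev2 _ Hs).
by rewrite coefCXC0 coefCXC1.
Qed.

Lemma sizeCXC (c e : {fraction {poly C}}) : c != 0 -> size (c%:P * 'X + e%:P) = 2%N.
Proof. by move=> c0; rewrite size_MXaddC polyC_eq0 (negbTE c0) andFb size_polyC c0. Qed.


Lemma rat11 (x : {fraction {poly C}}) (Nb Mb : {poly C}) :
  Nb != 0 -> Mb != 0 -> x != 0 -> x != pfrac Nb / pfrac Mb ->
  rational11 iota tau ((1 - iota x * tau) * (1 - iota (pfrac Nb / pfrac Mb) * tau)^-1).
Proof.
move=> Nb0 Mb0 x0 xb.
set beta := pfrac Nb / pfrac Mb.
set N' := shiftp h (-1) Nb; set M' := shiftp h (-1) Mb.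
have pN'0 : pfrac N' != 0 by rewrite pfrac_eq0 shiftp_eq0.
have pM'0 : pfrac M' != 0 by rewrite pfrac_eq0 shiftp_eq0.
have pNb0 : pfrac Nb != 0 by rewrite pfrac_eq0.
have pMb0 : pfrac Mb != 0 by rewrite pfrac_eq0.
pose e := pfrac (- M') / pfrac N'.
pose bm := pfrac N' / pfrac M'.
have beta0 : beta != 0 := mulf_neq0 pNb0 (invr_neq0 pMb0).
have pmM'0 : pfrac (- M') != 0 by rewrite pfrac_eq0 oppr_eq0 shiftp_eq0.
have e0 : e != 0 := mulf_neq0 pmM'0 (invr_neq0 pN'0).
have bm0 : bm != 0 := mulf_neq0 pN'0 (invr_neq0 pM'0).
pose c := x / beta.
have c0 : c != 0 := mulf_neq0 x0 (invr_neq0 beta0).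
have Htb : tau * iota bm = iota beta * tau by rewrite tau_frac /N' /M' !shiftpK.
have ebm : e * - bm = 1.
  by rewrite /e /bm /pfrac tofracN mulNr mulrNN mulrA (divfK pN'0) (divff pM'0).
have Hfac : 1 - iota beta * tau = (tau + iota e) * iota (- bm).
  by rewrite mulrDl -rmorphM ebm rmorph1 rmorphN mulrN Htb addrC.
pose D1 := 'X + e%:P.
pose D0 := c%:P * 'X + e%:P.
have sD0 : size D0 = 2%N := sizeCXC c e c0.
have oD1 : opev iota tau D1 = tau + iota e := opevXC e.
have oD0 : opev iota tau D0 = iota e + iota c * tau := opevCXC c e.
have D10 : D1 != 0 by rewrite -size_poly_eq0 size_XaddC.
have U1 : tau + iota e \is a GRing.unit.
  apply: HU; rewrite -oD1; apply/eqP => /Hinj E; move: D10; rewrite E eqxx; exact: negP.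
have Ub : iota (- bm) \is a GRing.unit.
  apply: HU; rewrite fmorph_eq0 oppr_eq0; exact: bm0.
have HR : (1 - iota x * tau) * (1 - iota beta * tau)^-1 =
          opev iota tau D0 * (opev iota tau D1)^-1.
  rewrite Hfac invrM // mulrA oD1; congr (_ * _).
  have -> : (iota (- bm))^-1 = iota e.
    have nbm0 : - bm != 0 by rewrite oppr_eq0; exact: bm0.
    rewrite -fmorphV; congr (iota _); apply: (mulIf nbm0).
    by rewrite ebm (mulVf nbm0).
  rewrite oD0 mulrBl mul1r -mulrA /e tau_frac -/e /N' /M' shiftpN !shiftpK.
  rewrite mulrA -rmorphM -mulNr -rmorphN; congr (_ + iota _ * _).
  by rewrite /c /beta /pfrac tofracN invf_div mulNr mulrN opprK.
exists D0, D1; split; last split; last split; last split; last split; last split.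
- split; first by split.
  + exact: monicXaddC.
  move=> E0 E1 [E10 HE] mE1; rewrite size_XaddC leqNgt; apply/negP => Hs.
  have E1eq : E1 = 1.
    have Hs1 : (size E1 <= 1)%N by [].
    move: mE1; rewrite (size1_polyC Hs1) monicE lead_coefC => /eqP ->.
    exact: polyC1.
  have opev1 : opev iota tau 1 = 1.
    have s1 : (size (1%R : {poly {fraction {poly C}}}) <= 2)%N by rewrite size_poly1.
    by rewrite (opev2 _ s1) coef1_0 coef1_1 rmorph1 rmorph0 mul0r addr0.
  move: HE; rewrite E1eq opev1 invr1 mulr1 HR => HE.
  have key : opev iota tau E0 * (tau + iota e) = opev iota tau D0.
    by rewrite -HE oD1 (mulrVK U1).
  pose en (i : nat) := pfrac (shiftp h i (- M')) / pfrac (shiftp h i N').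
  pose Q := E0 * 'X + \poly_(i < size E0) (E0`_i * en i).
  have oQ : opev iota tau Q = opev iota tau E0 * (tau + iota e).
    rewrite opevD mulrDr; congr (_ + _).
      rewrite (@opev_sum (size E0).+1 (E0 * 'X)); last first.
        by rewrite (leq_trans (size_mul_leq _ _)) // size_polyX addn2.
      rewrite big_ord_recl coefMX0 rmorph0 mul0r add0r /opev mulr_suml.
      by apply: eq_bigr => i _; rewrite lift0 coefMXS exprSr mulrA.
    rewrite (@opev_sum (size E0) _ (size_poly _ _)) /opev mulr_suml.
    apply: eq_bigr => i _; rewrite coef_poly ltn_ord rmorphM -!mulrA.
    by rewrite /e tau_fracn.
  have QD0 : Q = D0 by apply: opev_inj; rewrite oQ key.
  have E00 : E0 != 0.
    apply/eqP => E00; move: sD0; rewrite -QD0 /Q E00 mul0r add0r.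
    have := size_poly 0 (fun i => (0 : {poly {fraction {poly C}}})`_i * en i).
    by rewrite size_poly0 leqn0 => /eqP ->.
  have sQ : size Q = (size E0).+1.
    by rewrite /Q size_polyDl size_mulX // ltnS size_poly.
  have sE0 : size E0 = 1%N by move: sQ; rewrite QD0 sD0 => -[].
  have c1 := congr1 (fun q : {poly {fraction {poly C}}} => q`_1) QD0.
  have c0' := congr1 (fun q : {poly {fraction {poly C}}} => q`_0) QD0.
  move: c1 c0'; rewrite /D0 coefCXC1 coefCXC0 /Q !coefD coefMX0 coefMXS !coef_poly sE0.
  rewrite ltnn ltn0Sn addr0 add0r /en !shiftp0 => ce ee.
  move: xb; apply/negP; rewrite negbK; apply/eqP.
  apply: divr1_eq; change (c = 1); rewrite -ce.
  apply: (mulIf e0); rewrite mul1r; exact: ee.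
- exists c, [:: - (e / c)]; rewrite big_seq1 oD0 rmorphN opprK mulrDr -rmorphM mulrC (divfK c0).
  exact: addrC.
- exists 1, [:: - e]; rewrite big_seq1 oD1 rmorphN opprK rmorph1 mul1r; exact: erefl.
- exact: sD0.
- exact: size_XaddC.
- by rewrite /D0 /D1 coefCXC0 coefXC0.
- rewrite /D1 coefXC0; exact: e0.
Qed.

End Dlev.

Section PolyFacts.
Variables (C : numClosedFieldType) (h : C) (p : nat) (z : 'I_p -> C).
Variables (a b : 'I_p -> nat) (s : int).
Hypothesis Hs : s = 1 \/ s = -1.
Hypothesis Hab : forall k, a k = 0%N -> b k = 0%N.

Let S := fun k : 'I_p => (a k + b k != 0)%N.
Definition Zpoly := \prod_(k < p | (a k + b k != 0)%N) ('X - (z k)%:P).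

Lemma Sa k : ~~ (a k + b k != 0)%N -> a k = 0%N.
Proof. by rewrite negbK addn_eq0 => /andP[/eqP -> _]. Qed.
Lemma Sb k : ~~ (a k + b k != 0)%N -> b k = 0%N.
Proof. by rewrite negbK addn_eq0 => /andP[_ /eqP ->]. Qed.
Lemma Sa_pos k : (a k + b k != 0)%N -> (0 < a k)%N.
Proof.
rewrite lt0n; apply: contra => /eqP a0; rewrite a0 (Hab k a0).
by [].
Qed.

Lemma F1 : Tpoly h z s a * Zpoly = phipsi h z a b s a * shiftp h s (Tpoly h z s a).
Proof. exact: (@Tpoly_shift C h p z s a (fun k => (a k + b k != 0)%N) Sa). Qed.

Lemma F2 : Tpoly h z (- s) b * Zpoly = phipsi h z a b (- s) b * shiftp h (- s) (Tpoly h z (- s) b).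
Proof. exact: (@Tpoly_shift C h p z (- s) b (fun k => (a k + b k != 0)%N) Sb). Qed.

Lemma F3 : Tpoly h z (- s) (a_tilde a b) * Zpoly =
  shiftp h s (phipsi h z a b (- s) b) * shiftp h (- s) (Tpoly h z (- s) (a_tilde a b)).
Proof.
rewrite (@Tpoly_shift C h p z (- s) (a_tilde a b) (fun k => (a k + b k != 0)%N)); last first.
  by move=> k /negbTE; rewrite /a_tilde => ->.
congr (_ * _); rewrite /phipsi shiftp_prod; apply: eq_bigr => k Hk.
rewrite shiftpXC /a_tilde Hk; congr ('X - _%:P).
rewrite -natr1 intrN; ring.
Qed.

Lemma F4 : Tpoly h z s (b_tilde a b) * Zpoly =
  shiftp h s (phipsi h z a b s a) * shiftp h s (Tpoly h z s (b_tilde a b)).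
Proof.
rewrite (@Tpoly_shift C h p z s (b_tilde a b) (fun k => (a k + b k != 0)%N)); last first.
  by move=> k /negbTE; rewrite /b_tilde => ->.
congr (_ * _); rewrite /phipsi shiftp_prod; apply: eq_bigr => k Hk.
rewrite shiftpXC /b_tilde Hk; congr ('X - _%:P).
have := Sa_pos k Hk; case: (a k) => // n _ /=.
rewrite -natr1; ring.
Qed.

Lemma Zpoly_monic : Zpoly \is monic.
Proof. exact: monic_prod_XsubC. Qed.
Lemma phipsi_monic c n : phipsi h z a b c n \is monic.
Proof. exact: monic_prod_XsubC. Qed.
Lemma Tpoly_monic c n : Tpoly h z c n \is monic.
Proof. by apply: monic_prod => k _; exact: monic_prod_XsubC. Qed.

Lemma phi_neq_psi : h != 0 -> h_generic h z -> typical a b ->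
  phipsi h z a b s a != phipsi h z a b (- s) b.
Proof.
move=> h0 Hgen [k0 Hk0].
pose r := z k0 - s%:~R * (a k0)%:R * h.
have s0 : s%:~R != 0 :> C by rewrite intr_eq0; case: Hs => ->.
rewrite -subr_eq0; apply/negP => /eqP E.
have := congr1 (fun q => q.[r]) E; rewrite /= hornerD hornerN horner0.
rewrite /phipsi !horner_prod (bigD1 k0) //= hornerXsubC subrr mul0r add0r.
move/eqP; rewrite oppr_eq0; apply/negP/prodf_neq0 => k Hk.
rewrite hornerXsubC /r intrN.
have [->|nk] := eqVneq k k0.
  have -> : z k0 - s%:~R * (a k0)%:R * h - (z k0 - - s%:~R * (b k0)%:R * h) =
            - (s%:~R * (a k0 + b k0)%:R * h) by rewrite natrD; ring.
  by rewrite oppr_eq0 !mulf_neq0 // pnatr_eq0.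
have nk0 : k0 != k by rewrite eq_sym.
have := Hgen k0 k nk0 (s * (a k0 + b k)%:Z).
have -> : z k0 - s%:~R * (a k0)%:R * h - (z k - - s%:~R * (b k)%:R * h) =
          (z k0 - z k) - (s * (a k0 + b k)%:Z)%:~R * h.
  by rewrite intrM -pmulrn natrD; ring.
by rewrite subr_eq0.
Qed.

End PolyFacts.

Lemma frac_eqF (F : fieldType) (u v u' v' : F) :
  v != 0 -> v' != 0 -> u * v' = u' * v -> u / v = u' / v'.
Proof.
move=> v0 v'0 E; apply: (mulIf v0); apply: (mulIf v'0).
by rewrite (divfK v0) (mulrAC (u' / v')) (divfK v'0) E.
Qed.

Lemma sub_add_swap (F : comRingType) (a b c d : F) : a - b = d - c -> a + c = b + d.
Proof. by move=> H; rewrite -[a](subrK b) H; ring. Qed.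

Lemma mul_frac_swap (F : fieldType) (a b c d a' c' : F) :
  a * c = a' * c' -> a / b * (c / d) = a' / b * (c' / d).
Proof. by move=> E; rewrite mulrACA E mulrACA. Qed.

Lemma expand2 (R : nzRingType) (u v : R) : (1 - u) * (1 - v) = 1 - (v + u) + u * v.
Proof.
rewrite mulrBl mul1r mulrBr mulr1 opprB opprD !addrA.
by rewrite [LHS]addrAC.
Qed.

Section Kpart.
Variables (C : idomainType) (h : C) (s : int) (T1 T2 T1t T2t Z phi psi y yt : {poly C}).
Hypothesis F1 : T1 * Z = phi * shiftp h s T1.
Hypothesis F2 : T2 * Z = psi * shiftp h (- s) T2.
Hypothesis F3 : T1t * Z = shiftp h s psi * shiftp h (- s) T1t.
Hypothesis F4 : T2t * Z = shiftp h s phi * shiftp h s T2t.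
Hypothesis Hyt : y * shiftp h (- s) yt = phi - psi.
Hypotheses (T10 : T1 != 0) (T20 : T2 != 0) (T1t0 : T1t != 0) (T2t0 : T2t != 0).
Hypotheses (Z0 : Z != 0) (y0 : y != 0) (yt0 : yt != 0).

Lemma pfrac_eqP (N M N' M' : {poly C}) : M != 0 -> M' != 0 -> N * M' = N' * M ->
  pfrac N / pfrac M = pfrac N' / pfrac M'.
Proof.
move=> M0 M'0 E; apply: frac_eqF; rewrite ?pfrac_eq0 //.
by rewrite /pfrac -!tofracM E.
Qed.

Lemma eqA : pfrac (T1 * shiftp h s y) / pfrac (shiftp h s T1 * y) =
            pfrac (phi * shiftp h s y) / pfrac (Z * y).
Proof.
apply: pfrac_eqP; rewrite ?mulf_neq0 ?shiftp_eq0 //.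
have -> : T1 * shiftp h s y * (Z * y) = (T1 * Z) * (shiftp h s y * y) by ring.
rewrite F1; ring.
Qed.

Lemma eqB : pfrac (T2 * shiftp h (- - s) y) / pfrac (shiftp h (- s) T2 * y) =
            pfrac (psi * shiftp h s y) / pfrac (Z * y).
Proof.
rewrite opprK; apply: pfrac_eqP; rewrite ?mulf_neq0 ?shiftp_eq0 //.
have -> : T2 * shiftp h s y * (Z * y) = (T2 * Z) * (shiftp h s y * y) by ring.
rewrite F2; ring.
Qed.

Lemma eqAt : pfrac (T1t * shiftp h (- s) yt) / pfrac (shiftp h (- s) T1t * yt) =
            pfrac (shiftp h s psi * shiftp h (- s) yt) / pfrac (Z * yt).
Proof.
apply: pfrac_eqP; rewrite ?mulf_neq0 ?shiftp_eq0 //.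
have -> : T1t * shiftp h (- s) yt * (Z * yt) = (T1t * Z) * (shiftp h (- s) yt * yt) by ring.
rewrite F3; ring.
Qed.

Lemma eqBt : pfrac (T2t * shiftp h (- s) yt) / pfrac (shiftp h s T2t * yt) =
            pfrac (shiftp h s phi * shiftp h (- s) yt) / pfrac (Z * yt).
Proof.
apply: pfrac_eqP; rewrite ?mulf_neq0 ?shiftp_eq0 //.
have -> : T2t * shiftp h (- s) yt * (Z * yt) = (T2t * Z) * (shiftp h (- s) yt * yt) by ring.
rewrite F4; ring.
Qed.

Lemma Hyt' : shiftp h s y * yt = shiftp h s phi - shiftp h s psi.
Proof. by rewrite -shiftpB -Hyt shiftpM shiftpK. Qed.

Lemma sumAB : pfrac (phi * shiftp h s y) / pfrac (Z * y) +
              pfrac (shiftp h s psi * shiftp h (- s) yt) / pfrac (Z * yt) =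
              pfrac (psi * shiftp h s y) / pfrac (Z * y) +
              pfrac (shiftp h s phi * shiftp h (- s) yt) / pfrac (Z * yt).
Proof.
apply: sub_add_swap; rewrite -!mulrBl /pfrac -!tofracB -!mulrBl. rewrite -Hyt -Hyt'.
apply: pfrac_eqP; rewrite ?mulf_neq0 //; ring.
Qed.

End Kpart.

Lemma quad_eq (C : idomainType) (D : unitRingType) (iota : {rmorphism {fraction {poly C}} -> D})
  (tau : D) (x x' y y' x1 y1 : {fraction {poly C}}) :
  tau * iota x = iota x1 * tau -> tau * iota y = iota y1 * tau ->
  x + x' = y + y' -> x' * x1 = y' * y1 ->
  (1 - iota x' * tau) * (1 - iota x * tau) = (1 - iota y' * tau) * (1 - iota y * tau).
Proof.
move=> Hx Hy Hsum Hprod.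
have ab : forall u v v1, tau * iota v = iota v1 * tau ->
    (iota u * tau) * (iota v * tau) = iota (u * v1) * (tau * tau).
  move=> u v v1 H; rewrite rmorphM -mulrA (mulrA tau) H.
  by rewrite !mulrA.
rewrite !expand2 (ab _ _ _ Hx) (ab _ _ _ Hy) -!mulrDl -!rmorphD Hsum Hprod.
by [].
Qed.

Lemma frac_swap (D : unitRingType) (X Y X' Y' : D) :
  X \is a GRing.unit -> Y' \is a GRing.unit -> X * Y = X' * Y' -> Y * Y'^-1 = X^-1 * X'.
Proof.
move=> UX UY E.
by rewrite -{1}(mulKr UX (Y * Y'^-1)) (mulrA X Y) E (mulrK UY).
Qed.

Lemma pfrac_neq (C : idomainType) (N N' M : {poly C}) : N != N' -> M != 0 ->
  pfrac N / pfrac M != pfrac N' / pfrac M.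
Proof.
move=> NN M0; apply: contra NN => /eqP E.
have M0' : (pfrac M)^-1 != 0 by rewrite invr_eq0 pfrac_eq0.
by have := mulIf M0' E => /eqP; rewrite /pfrac tofrac_eq.
Qed.

Lemma frac_neq0 (C : idomainType) (N M : {poly C}) : N != 0 -> M != 0 ->
  pfrac N / pfrac M != 0.
Proof. by move=> N0 M0; rewrite mulf_neq0 ?invr_eq0 ?pfrac_eq0. Qed.

Lemma final_step (C : idomainType) (h : C) (D : unitRingType)
  (iota : {rmorphism {fraction {poly C}} -> D}) (tau : D)
  (HU : forall d : D, d != 0 -> d \is a GRing.unit)
  (Htau : forall q : {poly C}, tau * iota (pfrac q) = iota (pfrac (shiftp h 1 q)) * tau)
  (Hinj : forall P : {poly {fraction {poly C}}}, opev iota tau P = 0 -> P = 0)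
  (s : int) (Hs : s = 1 \/ s = -1) (phi psi Z y yt : {poly C}) :
  phi != 0 -> psi != 0 -> Z != 0 -> y != 0 -> yt != 0 -> phi != psi ->
  pfrac (phi * shiftp h s y) / pfrac (Z * y) +
  pfrac (shiftp h s psi * shiftp h (- s) yt) / pfrac (Z * yt) =
  pfrac (psi * shiftp h s y) / pfrac (Z * y) +
  pfrac (shiftp h s phi * shiftp h (- s) yt) / pfrac (Z * yt) ->
  rational11 iota tau
   ((1 - iota (pfrac (phi * shiftp h s y) / pfrac (Z * y)) * tau) ^ s *
    (1 - iota (pfrac (psi * shiftp h s y) / pfrac (Z * y)) * tau) ^ (- s)) /\
  (1 - iota (pfrac (phi * shiftp h s y) / pfrac (Z * y)) * tau) ^ s *
  (1 - iota (pfrac (psi * shiftp h s y) / pfrac (Z * y)) * tau) ^ (- s) =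
  (1 - iota (pfrac (shiftp h s psi * shiftp h (- s) yt) / pfrac (Z * yt)) * tau) ^ (- s) *
  (1 - iota (pfrac (shiftp h s phi * shiftp h (- s) yt) / pfrac (Z * yt)) * tau) ^ s.
Proof.
move=> phi0 psi0 Z0 y0 yt0 Hne Hsum.
have Un : forall x, 1 - iota x * tau \is a GRing.unit.
  by move=> x; apply: HU; exact: (@one_sub_neq0 _ _ _ _ Hinj x).
have ys0 : forall i, shiftp h i y != 0 by move=> i; rewrite shiftp_eq0.
have yts0 : forall i, shiftp h i yt != 0 by move=> i; rewrite shiftp_eq0.
have sh_inj : forall i (u v : {poly C}), u != v -> shiftp h i u != shiftp h i v.
  move=> i u v; apply: contra => /eqP E.
  by rewrite -(@shiftpKN _ h i u) E shiftpKN.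
case: Hs => Es; subst s.
- rewrite !expr1z !exprN1; split.
    apply: (@rat11 _ _ _ _ _ HU Htau Hinj).
    + exact: (mulf_neq0 psi0 (ys0 _)).
    + exact: (mulf_neq0 Z0 y0).
    + apply: frac_neq0; [exact: (mulf_neq0 phi0 (ys0 _)) | exact: (mulf_neq0 Z0 y0)].
    + apply: pfrac_neq; last exact: (mulf_neq0 Z0 y0).
      by rewrite (inj_eq (mulIf (ys0 _))).
  apply: frac_swap; rewrite ?Un //.
  eapply quad_eq; [exact: (@tau_frac _ _ _ _ _ HU Htau) | exact: (@tau_frac _ _ _ _ _ HU Htau) | exact: Hsum |].
  apply: mul_frac_swap; rewrite /pfrac -!tofracM; congr tofrac; rewrite !shiftpM; ring.
- rewrite opprK in Hsum *; rewrite !expr1z !exprN1.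
  have E : (1 - iota (pfrac (phi * shiftp h (-1) y) / pfrac (Z * y)) * tau)^-1 *
           (1 - iota (pfrac (psi * shiftp h (-1) y) / pfrac (Z * y)) * tau) =
           (1 - iota (pfrac (shiftp h (-1) psi * shiftp h 1 yt) / pfrac (Z * yt)) * tau) *
           (1 - iota (pfrac (shiftp h (-1) phi * shiftp h 1 yt) / pfrac (Z * yt)) * tau)^-1.
    symmetry; apply: frac_swap; rewrite ?Un //.
    eapply quad_eq; [exact: (@tau_frac _ _ _ _ _ HU Htau) | exact: (@tau_frac _ _ _ _ _ HU Htau) | | ].
      by rewrite addrC Hsum addrC.
    apply: mul_frac_swap; rewrite /pfrac -!tofracM; congr tofrac.
    by rewrite !shiftpM !shiftpK; ring.
  split; last exact: E.
  have sphi0 : shiftp h (-1) phi != 0 by rewrite shiftp_eq0.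
  have spsi0 : shiftp h (-1) psi != 0 by rewrite shiftp_eq0.
  rewrite E; apply: (@rat11 _ _ _ _ _ HU Htau Hinj).
  + exact: (mulf_neq0 sphi0 (yts0 _)).
  + exact: (mulf_neq0 Z0 yt0).
  + apply: frac_neq0; [exact: (mulf_neq0 spsi0 (yts0 _)) | exact: (mulf_neq0 Z0 yt0)].
  + apply: pfrac_neq; last exact: (mulf_neq0 Z0 yt0).
    rewrite (inj_eq (mulIf (yts0 _))).
    by apply: sh_inj; rewrite eq_sym.
Qed.

Theorem lemma4p5 (C : numClosedFieldType) (h : C) (p : nat) (z : 'I_p -> C)
  (a b : 'I_p -> nat) (s1 : int) (t : seq C) (y yt : {poly C})
  (D : unitRingType) (iota : {rmorphism {fraction {poly C}} -> D}) (tau : D) :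
  (* D is a division ring containing K[tau] = C(x)[tau] *)
  (forall d : D, d != 0 -> d \is a GRing.unit) ->
  (forall q : {poly C}, tau * iota (pfrac q) = iota (pfrac (shiftp h 1 q)) * tau) ->
  (forall P : {poly {fraction {poly C}}}, opev iota tau P = 0 -> P = 0) ->
  (* data *)
  h != 0 ->
  (s1 = 1 \/ s1 = -1) ->
  (forall k, a k = 0%N -> b k = 0%N) ->
  h_generic h z ->
  BAE_solution h z a b s1 (- s1) t ->
  y = \prod_(t0 <- t) ('X - t0%:P) ->
  y * shiftp h (- s1) yt = phipsi h z a b s1 a - phipsi h z a b (- s1) b ->
  typical a b ->
  let R := Rop iota tau h s1 (- s1) (Tpoly h z s1 a) (Tpoly h z (- s1) b) y in
  rational11 iota tau R /\
  R = Rop iota tau h (- s1) s1 (Tpoly h z (- s1) (a_tilde a b))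
                               (Tpoly h z s1 (b_tilde a b)) yt.
Proof.
move=> HU Htau Hinj h0 Hs Hab Hgen _ Hyp Hyt Htyp R.
have Z0 : Zpoly C p z a b != 0 := monic_neq0 (Zpoly_monic C p z a b).
have y0 : y != 0 by rewrite Hyp; apply: monic_neq0; apply: monic_prod_XsubC.
have T10 := monic_neq0 (Tpoly_monic C h p z s1 a).
have T20 := monic_neq0 (Tpoly_monic C h p z (- s1) b).
have T1t0 := monic_neq0 (Tpoly_monic C h p z (- s1) (a_tilde a b)).
have T2t0 := monic_neq0 (Tpoly_monic C h p z s1 (b_tilde a b)).
have phi0 := monic_neq0 (phipsi_monic C h p z a b s1 a).
have psi0 := monic_neq0 (phipsi_monic C h p z a b (- s1) b).
have Hne := phi_neq_psi C h p z a b s1 Hs h0 Hgen Htyp.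
have yt0 : yt != 0.
  apply/eqP => E; move: Hne; rewrite -subr_eq0 -Hyt E.
  have -> : shiftp h (- s1) 0 = 0 by apply/eqP; rewrite shiftp_eq0.
  by rewrite mulr0 eqxx.
have F1' := F1 C h p z a b s1.
have F2' := F2 C h p z a b s1.
have F3' := F3 C h p z a b s1.
have F4' := F4 C h p z a b s1 Hab.
have EA := @eqA _ _ _ _ _ _ _ F1' T10 Z0 y0.
have EB := @eqB _ _ _ _ _ _ _ F2' T20 Z0 y0.
have EAt := @eqAt _ _ _ _ _ _ _ F3' T1t0 Z0 yt0.
have EBt := @eqBt _ _ _ _ _ _ _ F4' T2t0 Z0 yt0.
have Hsum := @sumAB _ _ _ _ _ _ _ _ Hyt Z0 y0 yt0.
rewrite /R /Rop EA EB EAt EBt.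
exact: (@final_step _ _ _ _ _ HU Htau Hinj _ Hs _ _ _ _ _ phi0 psi0 Z0 y0 yt0 Hne Hsum).
Qed.
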